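(* There exists an $S(3,K_4^{(3)}+e,v)$ for each $v\in\{7,11,16,26,31,32\}$.
   Context: $K_4^{(3)}+e$ denotes the 3-uniform hypergraph with vertex set $\{1,2,3,4,5\}$ and edge set $\{\{1,2,3\},\{1,2,4\},\{1,3,4\},\{2,3,4\},\{3,4,5\}\}$. An $S(3,K_4^{(3)}+e,v)$ is a collection of 3-uniform hypergraphs (blocks) on subsets of a $v$-set $X$, each isomorphic to $K_4^{(3)}+e$, whose edge sets partition the set of all 3-subsets of $X$. *)

(* Defs.v *)
From mathcomp Require Import all_boot.
Set Implicit Arguments. Unset Strict Implicit. Unset Printing Implicit Defensive.

(* Vertices of K_4^(3)+e are 'I_5, with 0,1,2,3,4 standing for 1,2,3,4,5. *)
Definition v5 (i : nat) : 'I_5 := inord i.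

Definition K4e_edges : seq {set 'I_5} :=
  [:: [set v5 0; v5 1; v5 2]; [set v5 0; v5 1; v5 3]; [set v5 0; v5 2; v5 3];
      [set v5 1; v5 2; v5 3]; [set v5 2; v5 3; v5 4]].

(* A block on the point set X = 'I_v is a copy of K_4^(3)+e, given by an
   injective vertex map f : 'I_5 -> 'I_v (an isomorphism onto the block). *)
Definition block_edges (v : nat) (f : {ffun 'I_5 -> 'I_v}) : seq {set 'I_v} :=
  map (fun e : {set 'I_5} => f @: e) K4e_edges.

(* An S(3, K_4^(3)+e, v): a collection (list) of blocks whose edge sets
   partition the 3-subsets of X: each 3-subset of X occurs as an edge of
   exactly one block (counted with multiplicity). *)
Definition is_S3_K4e (v : nat) (B : seq {ffun 'I_5 -> 'I_v}) : Prop :=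
  (forall f, f \in B -> injective f) /\
  (forall T : {set 'I_v}, #|T| = 3 ->
     sumn [seq count (pred1 T) (block_edges f) | f <- B] = 1).

(* Main.v *)
Require Import Defs.
From mathcomp Require Import all_boot.
Set Implicit Arguments. Unset Strict Implicit.

Definition idxs : seq (seq nat) := [:: [::0;1;2];[::0;1;3];[::0;2;3];[::1;2;3];[::2;3;4]].

Lemma v5_val l : all (fun i => i < 5) l -> map val (map v5 l) = l.
Proof. elim: l => //= a l IH /andP[a5 /IH ->]. by rewrite /v5 inordK. Qed.

Lemma K4e_map (X : Type) (g : {set 'I_5} -> X) (h : seq 'I_5 -> X) :
  (forall (e : {set 'I_5}) (l : seq 'I_5), uniq (map val l) -> e =i l -> g e = h l) ->
  map g K4e_edges = map h (map (map v5) idxs).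
Proof.
move=> H; rewrite /K4e_edges /idxs /=.
have mem3 a b c : [set v5 a; v5 b; v5 c] =i [:: v5 a; v5 b; v5 c].
  by move=> x; rewrite !inE orbA.
rewrite !(H _ _ _ (mem3 _ _ _)) //.
all: by rewrite (@v5_val [:: _; _; _]).
Qed.

Section S.
Variable n : nat.
Definition mkf (s : seq nat) : {ffun 'I_5 -> 'I_n.+1} := [ffun i : 'I_5 => inord (nth 0 s i)].
Definition good (s : seq nat) := [&& size s == 5, uniq s & all (fun x => x < n.+1) s].
Definition key (A : {set 'I_n.+1}) : seq nat := sort leq [seq val x | x <- enum A].
Definition keys (D : seq (seq nat)) : seq (seq nat) :=
  flatten [seq [seq sort leq [seq nth 0 s i | i <- e] | e <- idxs] | s <- D].

Lemma mkf_val s i : good s -> val (mkf s i) = nth 0 s i.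
Proof.
case/and3P=> /eqP sz _ /allP al; rewrite ffunE /= inordK //.
apply: al; apply: mem_nth; rewrite sz; exact: ltn_ord.
Qed.

Lemma mkf_inj s : good s -> injective (mkf s).
Proof.
move=> g i j /(congr1 val); rewrite !mkf_val //.
case/and3P: g => /eqP sz u _ E; apply: val_inj => /=.
by apply/eqP; rewrite -(nth_uniq 0 _ _ u) ?sz ?ltn_ord // E.
Qed.

Lemma key_im (f : 'I_5 -> 'I_n.+1) (e : {set 'I_5}) (l : seq 'I_5) : injective f -> uniq (map val l) -> e =i l ->
  key (f @: e) = sort leq [seq val (f x) | x <- l] /\ #|f @: e| = size l.
Proof.
move=> fi ul el.
have ul' : uniq l by move: ul; apply: map_uniq.
have pe : perm_eq (enum (f @: e)) (map f l).
  apply: uniq_perm; first exact: enum_uniq.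
    by rewrite map_inj_uniq.
  move=> y; rewrite mem_enum; apply/imsetP/mapP => -[x xe ->]; exists x => //.
    by rewrite -el. by rewrite el.
split.
  rewrite /key; apply/perm_sortP; [exact: leq_total|exact: leq_trans|exact: anti_leq|].
  by rewrite (map_comp val f); apply: perm_map.
by rewrite (card_imset _ fi) (eq_card el) (card_uniqP ul').
Qed.

Lemma block_keys s : good s -> map key (block_edges (mkf s)) = [seq sort leq [seq nth 0 s i | i <- e] | e <- idxs].
Proof.
move=> g; rewrite /block_edges -map_comp.
have -> : idxs = map (map val) (map (map v5) idxs).
  rewrite -map_comp -[LHS]map_id; apply/eq_in_map => l li /=; rewrite v5_val //.
  by move: l li; apply/allP.
rewrite -map_comp; apply: K4e_map => e l ul el /=.
rewrite (key_im (mkf_inj g) ul el).1 -map_comp; congr sort; apply: eq_map => x /=.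
exact: mkf_val.
Qed.

Lemma block_card s A : good s -> A \in block_edges (mkf s) -> #|A| == 3.
Proof.
move=> g; rewrite /block_edges.
have H := @K4e_map _ (fun e : {set 'I_5} => #|mkf s @: e| == 3) (fun l => size l == 3).
have E : [seq #|mkf s @: e| == 3 | e : {set 'I_5} <- K4e_edges] = [seq size l == 3 | l <- map (map v5) idxs].
  by apply: H => e' l ul el; rewrite (key_im (mkf_inj g) ul el).2.
have : all id [seq #|mkf s @: e| == 3 | e : {set 'I_5} <- K4e_edges] by rewrite E.
rewrite all_map => /allP al /mapP[e ee ->]; exact: (al e ee).
Qed.

Lemma design_ok (D : seq (seq nat)) :
  all good D -> uniq (keys D) -> size D * 5 = 'C(n.+1, 3) ->
  is_S3_K4e [seq mkf s | s <- D].
Proof.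
move=> /allP gD uk sz; split.
  by move=> f /mapP[s sD ->]; apply: mkf_inj; apply: gD.
move=> T T3.
set E := flatten [seq block_edges f | f <- [seq mkf s | s <- D]].
have -> : sumn [seq count (pred1 T) (block_edges f) | f <- [seq mkf s | s <- D]] = count (pred1 T) E.
  rewrite /E count_flatten; congr sumn; by elim: [seq mkf s | s <- D] => //= f l ->.
have kE : map key E = keys D.
  rewrite /E /keys map_flatten -!map_comp; congr flatten; apply/eq_in_map => s sD /=.
  exact: block_keys (gD s sD).
have uE : uniq E by apply: (map_uniq (f:=key)); rewrite kE.
have szE : size E = 'C(n.+1, 3).
  rewrite -(size_map key) kE /keys size_flatten /shape -map_comp.
  rewrite -sz mulnC; elim: D {gD uk sz kE uE E} => //= s D IH.
  by rewrite IH mulnS.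
have sub : {subset E <= [set A : {set 'I_n.+1} | #|A| == 3]}.
  move=> A /flattenP[bs /mapP[f /mapP[s sD ->] ->] Ab].
  by rewrite inE; apply: block_card Ab; apply: gD.
have sub' : [set x in E] \subset [set A : {set 'I_n.+1} | #|A| == 3].
  by apply/subsetP => x; rewrite inE; apply: sub.
have eqc : #|[set x in E]| = #|[set A : {set 'I_n.+1} | #|A| == 3]|.
  by rewrite cardsE card_draws card_ord -szE (card_uniqP uE).
have /(subset_cardP eqc) eqE := sub'.
have TE : T \in E.
  by have := eqE T; rewrite !inE T3 eqxx => ->.
by rewrite (count_uniq_mem T uE) TE.
Qed.
End S.


Fixpoint ltl (s t : seq nat) : bool :=
  match s, t with
  | [::], [::] => false
  | [::], _ => true
  | _, [::] => false
  | a :: s', b :: t' => (a < b) || ((a == b) && ltl s' t')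
  end.

Lemma ltl_irr : irreflexive ltl.
Proof. by elim=> //= a s ->; rewrite ltnn eqxx. Qed.

Lemma ltl_trans : transitive ltl.
Proof.
move=> t s; elim: s t => [|a s IH] [|b t] [|c u] //=.
case/orP=> [ba|/andP[/eqP<- ts]]; case/orP=> [ac|/andP[/eqP<- su]].
- by rewrite (ltn_trans ba ac).
- by rewrite ba.
- by rewrite ac.
- by rewrite eqxx (IH _ _ ts su) orbT.
Qed.

Lemma uniq_of_sorted (L : seq (seq nat)) : sorted ltl (sort ltl L) -> uniq L.
Proof.
move=> h; rewrite -(perm_uniq (permEl (perm_sort ltl L))).
exact: (sorted_uniq ltl_trans ltl_irr h).
Qed.

Definition dev (v : nat) (base : seq (seq nat)) : seq (seq nat) :=
  [seq [seq (x + k) %% v | x <- b] | b <- base, k <- iota 0 v].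

Lemma design_of (n : nat) (base : seq (seq nat)) :
  let D := dev n.+1 base in
  all (good n) D && sorted ltl (sort ltl (keys D)) && (size D * 5 == 'C(n.+1, 3)) ->
  exists B : seq {ffun 'I_5 -> 'I_n.+1}, is_S3_K4e B.
Proof.
move=> D /andP[/andP[g u] /eqP s]; exists [seq mkf n s | s <- D].
by apply: design_ok => //; apply: uniq_of_sorted.
Qed.

Lemma case7 : exists B : seq {ffun 'I_5 -> 'I_7}, is_S3_K4e B.
Proof. apply: (@design_of 6 [:: [:: 0; 1; 2; 4; 5]]). vm_compute. reflexivity. Qed.

Lemma case11 : exists B : seq {ffun 'I_5 -> 'I_11}, is_S3_K4e B.
Proof. apply: (@design_of 10 [:: [:: 0; 1; 2; 4; 7]; [:: 0; 1; 6; 9; 2]; [:: 0; 2; 6; 7; 3]]). vm_compute. reflexivity. Qed.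

Lemma case16 : exists B : seq {ffun 'I_5 -> 'I_16}, is_S3_K4e B.
Proof. apply: (@design_of 15 [:: [:: 0; 2; 1; 9; 7]; [:: 0; 2; 4; 7; 1]; [:: 0; 1; 3; 4; 8]; [:: 0; 3; 8; 10; 4]; [:: 0; 8; 4; 13; 14]; [:: 0; 5; 3; 9; 8]; [:: 0; 1; 6; 12; 13]]). vm_compute. reflexivity. Qed.

Lemma case26 : exists B : seq {ffun 'I_5 -> 'I_26}, is_S3_K4e B.
Proof. apply: (@design_of 25 [:: [:: 0; 2; 14; 1; 5]; [:: 0; 17; 4; 1; 18]; [:: 0; 1; 19; 24; 13]; [:: 0; 23; 24; 6; 10]; [:: 0; 6; 16; 18; 21]; [:: 0; 22; 5; 21; 18]; [:: 0; 21; 7; 25; 16]; [:: 0; 11; 9; 7; 25]; [:: 0; 7; 3; 19; 12]; [:: 0; 17; 25; 14; 12]; [:: 0; 12; 6; 2; 8]; [:: 0; 6; 1; 7; 14]; [:: 0; 21; 12; 18; 5]; [:: 0; 9; 21; 24; 5]; [:: 0; 11; 22; 25; 19]; [:: 0; 19; 5; 9; 25]; [:: 0; 16; 1; 11; 19]; [:: 0; 21; 8; 19; 2]; [:: 0; 22; 3; 18; 23]; [:: 0; 9; 2; 20; 7]]). vm_compute. reflexivity. Qed.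

Lemma case31 : exists B : seq {ffun 'I_5 -> 'I_31}, is_S3_K4e B.
Proof. apply: (@design_of 30 [:: [:: 0; 13; 2; 6; 14]; [:: 0; 8; 11; 6; 19]; [:: 0; 26; 16; 27; 10]; [:: 0; 29; 14; 6; 16]; [:: 0; 9; 21; 22; 1]; [:: 0; 25; 30; 24; 16]; [:: 0; 26; 14; 23; 19]; [:: 0; 3; 5; 14; 19]; [:: 0; 19; 20; 2; 13]; [:: 0; 23; 12; 28; 11]; [:: 0; 25; 3; 4; 5]; [:: 0; 15; 16; 28; 18]; [:: 0; 7; 5; 4; 8]; [:: 0; 12; 7; 24; 6]; [:: 0; 7; 28; 30; 26]; [:: 0; 15; 22; 7; 8]; [:: 0; 10; 14; 27; 29]; [:: 0; 10; 24; 26; 2]; [:: 0; 5; 26; 18; 22]; [:: 0; 18; 28; 25; 11]; [:: 0; 4; 23; 13; 29]; [:: 0; 10; 17; 28; 8]; [:: 0; 12; 5; 16; 22]; [:: 0; 22; 4; 16; 10]; [:: 0; 3; 12; 11; 20]; [:: 0; 6; 26; 22; 1]; [:: 0; 2; 22; 14; 21]; [:: 0; 29; 25; 22; 7]; [:: 0; 13; 29; 19; 9]]). vm_compute. reflexivity. Qed.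

Lemma case32 : exists B : seq {ffun 'I_5 -> 'I_32}, is_S3_K4e B.
Proof. apply: (@design_of 31 [:: [:: 0; 22; 6; 1; 19]; [:: 0; 2; 8; 19; 4]; [:: 0; 29; 7; 21; 30]; [:: 0; 8; 10; 22; 6]; [:: 0; 24; 22; 28; 13]; [:: 0; 29; 16; 6; 2]; [:: 0; 26; 22; 2; 3]; [:: 0; 17; 11; 15; 18]; [:: 0; 14; 12; 27; 18]; [:: 0; 11; 5; 25; 12]; [:: 0; 18; 3; 2; 13]; [:: 0; 7; 15; 23; 18]; [:: 0; 12; 20; 17; 7]; [:: 0; 19; 16; 15; 2]; [:: 0; 31; 27; 30; 18]; [:: 0; 23; 31; 24; 17]; [:: 0; 3; 30; 25; 26]; [:: 0; 10; 27; 19; 16]; [:: 0; 11; 14; 31; 24]; [:: 0; 26; 12; 8; 3]; [:: 0; 26; 1; 18; 28]; [:: 0; 9; 30; 10; 29]; [:: 0; 13; 26; 5; 15]; [:: 0; 4; 2; 25; 24]; [:: 0; 9; 6; 13; 2]; [:: 0; 14; 10; 29; 4]; [:: 0; 19; 30; 7; 12]; [:: 0; 13; 31; 2; 5]; [:: 0; 18; 16; 23; 1]; [:: 0; 31; 6; 26; 29]; [:: 0; 21; 16; 12; 25]]). vm_compute. reflexivity. Qed.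

Theorem lemma3p1 (v : nat) :
  v \in [:: 7; 11; 16; 26; 31; 32] ->
  exists B : seq {ffun 'I_5 -> 'I_v}, is_S3_K4e B.
Proof.
rewrite !inE.
case/orP=> [/eqP->|]; first exact: case7.
case/orP=> [/eqP->|]; first exact: case11.
case/orP=> [/eqP->|]; first exact: case16.
case/orP=> [/eqP->|]; first exact: case26.
case/orP=> [/eqP->|/eqP->]; first exact: case31.
exact: case32.
Qed.
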